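(* (1) Every instance of the schemes $\curlyvee_\Box$ and $\curlyvee_\Diamond$ is provable in $\mathcal{H}\mathsf{CN4K}^\pm\oplus\{\Join_\Box,\Join_\Diamond\}$, and every instance of the schemes $\pm_\Box$ and $\pm_\Diamond$ is provable in $\mathcal{H}\mathsf{CN4K}^\curlyvee\oplus\{\Join_\Box,\Join_\Diamond\}$. (2) In the calculus $\mathcal{H}\mathsf{CN4K}\oplus\{\pm_\Box,\pm_\Diamond,\curlyvee_\Box,\curlyvee_\Diamond\}$, for a propositional variable $p$, neither $\Box p\leftrightarrow{\sim}\Diamond{\sim}p$ (an instance of $\Join_\Box$) nor $\Diamond p\leftrightarrow{\sim}\Box{\sim}p$ (an instance of $\Join_\Diamond$) is provable.
   Context: Fix a countable set $\mathsf{Prop}$ of propositional variables. The language $\mathcal{L}$ is given by the grammar $\phi::=p\mid{\sim}\phi\mid(\phi\wedge\phi)\mid(\phi\vee\phi)\mid(\phi\to\phi)\mid\Box\phi\mid\Diamond\phi$ with $p\in\mathsf{Prop}$. $\phi\leftrightarrow\chi$ abbreviates $(\phi\to\chi)\wedge(\chi\to\phi)$. $\mathcal{H}\mathsf{N4}$ has as axioms all $\mathcal{L}$-instances of: $\phi\to(\chi\to\phi)$; $(\phi\to(\chi\to\psi))\to((\phi\to\chi)\to(\phi\to\psi))$; $\phi\wedge\chi\to\phi$; $\phi\wedge\chi\to\chi$; $\phi\to(\chi\to\phi\wedge\chi)$; $\phi\to\phi\vee\chi$; $\chi\to\phi\vee\chi$; $(\phi\to\psi)\to((\chi\to\psi)\to(\phi\vee\chi\to\psi))$;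 ${\sim}{\sim}\phi\leftrightarrow\phi$; ${\sim}(\phi\wedge\chi)\leftrightarrow({\sim}\phi\vee{\sim}\chi)$; ${\sim}(\phi\vee\chi)\leftrightarrow({\sim}\phi\wedge{\sim}\chi)$; ${\sim}(\phi\to\chi)\leftrightarrow(\phi\wedge{\sim}\chi)$; and modus ponens. Further schemes: $\top_\Box$: $\Box(\phi\to\phi)$; $\top_\Diamond$: ${\sim}\Diamond{\sim}(\phi\to\phi)$; $\wedge_\Box$: $(\Box\phi\wedge\Box\chi)\to\Box(\phi\wedge\chi)$; $\wedge_\Diamond$: $({\sim}\Diamond\phi\wedge{\sim}\Diamond\chi)\to{\sim}\Diamond(\phi\vee\chi)$; $\pm_\Box$: $\Box(\phi\to\chi)\to(\Diamond\phi\to\Diamond\chi)$; $\pm_\Diamond$: ${\sim}\Diamond{\sim}({\sim}\phi\to{\sim}\chi)\to({\sim}\Box\phi\to{\sim}\Box\chi)$; $\curlyvee_\Box$: $\Box(\phi\to\chi)\to({\sim}\Box{\sim}\phi\to{\sim}\Box{\sim}\chi)$; $\curlyvee_\Diamond$: ${\sim}\Diamond{\sim}(\phi\to\chi)\to(\Diamond\phi\to\Diamond\chi)$; $\Join_\Box$: $\Box\phi\leftrightarrow{\sim}\Diamond{\sim}\phi$; $\Join_\Diamond$: $\Diamond\phi\leftrightarrow{\sim}\Box{\sim}\phi$. Rules: from $\vdash\phi\to\chi$ infer $\vdash\Box\phi\to\Box\chi$; from $\vdash\phi\to\chi$ infer $\vdash\Diamond\phi\to\Diamond\chi$; from $\vdash{\sim}\phi\to{\sim}\chi$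 infer $\vdash{\sim}\Box\phi\to{\sim}\Box\chi$; from $\vdash{\sim}\phi\to{\sim}\chi$ infer $\vdash{\sim}\Diamond\phi\to{\sim}\Diamond\chi$. $\mathcal{H}\mathsf{CN4K}=\mathcal{H}\mathsf{N4}$ plus $\top_\Box,\wedge_\Box,\top_\Diamond,\wedge_\Diamond$ and the four modal rules. $\mathcal{C}\oplus\mathbf{R}$ denotes calculus $\mathcal{C}$ extended with the axiom schemes/rules in $\mathbf{R}$; $\mathcal{H}\mathsf{CN4K}^\pm=\mathcal{H}\mathsf{CN4K}\oplus\{\pm_\Box,\pm_\Diamond\}$, $\mathcal{H}\mathsf{CN4K}^\curlyvee=\mathcal{H}\mathsf{CN4K}\oplus\{\curlyvee_\Box,\curlyvee_\Diamond\}$. A formula is provable if it is the last element of a finite sequence of axiom instances and rule consequences of earlier elements. *)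

(* Defs.v *)
Inductive form : Type :=
| Var : nat -> form
| Neg : form -> form            (* strong negation ~ *)
| And : form -> form -> form
| Or  : form -> form -> form
| Imp : form -> form -> form
| Box : form -> form
| Dia : form -> form.

Definition Iff (a b : form) : form := And (Imp a b) (Imp b a).

Inductive N4ax : form -> Prop :=
| ax_k  a b   : N4ax (Imp a (Imp b a))
| ax_s  a b c : N4ax (Imp (Imp a (Imp b c)) (Imp (Imp a b) (Imp a c)))
| ax_a1 a b   : N4ax (Imp (And a b) a)
| ax_a2 a b   : N4ax (Imp (And a b) b)
| ax_a3 a b   : N4ax (Imp a (Imp b (And a b)))
| ax_o1 a b   : N4ax (Imp a (Or a b))
| ax_o2 a b   : N4ax (Imp b (Or a b))
| ax_o3 a b c : N4ax (Imp (Imp a c) (Imp (Imp b c) (Imp (Or a b) c)))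
| ax_nn a     : N4ax (Iff (Neg (Neg a)) a)
| ax_na a b   : N4ax (Iff (Neg (And a b)) (Or (Neg a) (Neg b)))
| ax_no a b   : N4ax (Iff (Neg (Or a b)) (And (Neg a) (Neg b)))
| ax_ni a b   : N4ax (Iff (Neg (Imp a b)) (And a (Neg b))).

Definition TopBox (f : form) : Prop := exists a, f = Box (Imp a a).
Definition TopDia (f : form) : Prop := exists a, f = Neg (Dia (Neg (Imp a a))).
Definition WedgeBox (f : form) : Prop :=
  exists a b, f = Imp (And (Box a) (Box b)) (Box (And a b)).
Definition WedgeDia (f : form) : Prop :=
  exists a b, f = Imp (And (Neg (Dia a)) (Neg (Dia b))) (Neg (Dia (Or a b))).
Definition PmBox (f : form) : Prop :=
  exists a b, f = Imp (Box (Imp a b)) (Imp (Dia a) (Dia b)).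
Definition PmDia (f : form) : Prop :=
  exists a b, f = Imp (Neg (Dia (Neg (Imp (Neg a) (Neg b)))))
                      (Imp (Neg (Box a)) (Neg (Box b))).
Definition VeeBox (f : form) : Prop :=
  exists a b, f = Imp (Box (Imp a b)) (Imp (Neg (Box (Neg a))) (Neg (Box (Neg b)))).
Definition VeeDia (f : form) : Prop :=
  exists a b, f = Imp (Neg (Dia (Neg (Imp a b)))) (Imp (Dia a) (Dia b)).
Definition JoinBox (f : form) : Prop :=
  exists a, f = Iff (Box a) (Neg (Dia (Neg a))).
Definition JoinDia (f : form) : Prop :=
  exists a, f = Iff (Dia a) (Neg (Box (Neg a))).

Inductive prv (X : form -> Prop) : form -> Prop :=
| pr_n4 f : N4ax f -> prv X f
| pr_topbox f : TopBox f -> prv X f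
| pr_wedgebox f : WedgeBox f -> prv X f
| pr_topdia f : TopDia f -> prv X f
| pr_wedgedia f : WedgeDia f -> prv X f
| pr_extra f : X f -> prv X f
| pr_mp a b : prv X a -> prv X (Imp a b) -> prv X b
| pr_rbox a b : prv X (Imp a b) -> prv X (Imp (Box a) (Box b))
| pr_rdia a b : prv X (Imp a b) -> prv X (Imp (Dia a) (Dia b))
| pr_rnbox a b : prv X (Imp (Neg a) (Neg b)) ->
                 prv X (Imp (Neg (Box a)) (Neg (Box b)))
| pr_rndia a b : prv X (Imp (Neg a) (Neg b)) ->
                 prv X (Imp (Neg (Dia a)) (Neg (Dia b))).

Definition X_pm_join (f : form) : Prop :=
  PmBox f \/ PmDia f \/ JoinBox f \/ JoinDia f.
Definition X_vee_join (f : form) : Prop :=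
  VeeBox f \/ VeeDia f \/ JoinBox f \/ JoinDia f.
Definition X_pm_vee (f : form) : Prop :=
  PmBox f \/ PmDia f \/ VeeBox f \/ VeeDia f.

(* Main.v *)
Require Import Defs.
From Stdlib Require Import Bool.

Section Gen.
Variable X : form -> Prop.

Lemma iffL a b : prv X (Iff a b) -> prv X (Imp a b).
Proof. intro H. eapply pr_mp. exact H. apply pr_n4, ax_a1. Qed.
Lemma iffR a b : prv X (Iff a b) -> prv X (Imp b a).
Proof. intro H. eapply pr_mp. exact H. apply pr_n4, ax_a2. Qed.

Lemma L1 a b c : prv X (Imp b c) -> prv X (Imp (Imp a b) (Imp a c)).
Proof.
  intro H. eapply pr_mp. eapply pr_mp. exact H. apply pr_n4, ax_k.
  apply pr_n4, ax_s.
Qed.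

Lemma trans a b c : prv X (Imp a b) -> prv X (Imp b c) -> prv X (Imp a c).
Proof. intros H1 H2. eapply pr_mp. exact H1. apply L1. exact H2. Qed.

Lemma L2 a b c : prv X (Imp a b) -> prv X (Imp (Imp b c) (Imp a c)).
Proof.
  intro H.
  assert (T : prv X (Imp (Imp b c) (Imp (Imp a b) (Imp a c)))).
  { eapply trans. apply pr_n4, ax_k. apply pr_n4, ax_s. }
  eapply pr_mp. eapply pr_mp. exact H. apply pr_n4, ax_k.
  eapply pr_mp. exact T. apply pr_n4, ax_s.
Qed.

Lemma compose P Q R Q' R' : prv X (Imp P (Imp Q R)) -> prv X (Imp Q' Q) ->
  prv X (Imp R R') -> prv X (Imp P (Imp Q' R')).
Proof.
  intros H1 H2 H3. eapply trans. exact H1. eapply trans.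
  apply L2. exact H2. apply L1. exact H3.
Qed.
End Gen.

Fixpoint ev (e : nat -> bool) (f : form) : bool * bool :=
  match f with
  | Var n => (e n, false)
  | Neg a => let (v, w) := ev e a in (w, v)
  | And a b => let (va, fa) := ev e a in let (vb, fb) := ev e b in
               (va && vb, fa || fb)
  | Or a b => let (va, fa) := ev e a in let (vb, fb) := ev e b in
               (va || vb, fa && fb)
  | Imp a b => let (va, fa) := ev e a in let (vb, fb) := ev e b in
               (implb va vb, va && fb)
  | Box a => (true, false)
  | Dia a => (true, snd (ev e a))
  end.

Lemma sound f : prv X_pm_vee f -> forall e, fst (ev e f) = true.
Proof.
  induction 1; intro e.
  - destruct H; simpl;
      repeat match goal with |- context [ev e ?x] => destruct (ev e x) end;
      repeat match goal with b : bool |- _ => destruct b end; reflexivity.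
  - destruct H as [a ->]; reflexivity.
  - destruct H as [a [b ->]]; reflexivity.
  - destruct H as [a ->]; simpl; destruct (ev e a) as [[] []]; reflexivity.
  - destruct H as [a [b ->]]; simpl; destruct (ev e a) as [[] []];
      destruct (ev e b) as [[] []]; reflexivity.
  - destruct H as [[a [b ->]]|[[a [b ->]]|[[a [b ->]]|[a [b ->]]]]]; simpl;
      try (destruct (ev e a) as [[] []]; destruct (ev e b) as [[] []]); reflexivity.
  - specialize (IHprv1 e); specialize (IHprv2 e); simpl in IHprv2.
    destruct (ev e a) as [[] []]; destruct (ev e b) as [[] []]; simpl in *; congruence.
  - reflexivity.
  - reflexivity.
  - reflexivity.
  - specialize (IHprv e); simpl in *.
    destruct (ev e a) as [[] []]; destruct (ev e b) as [[] []]; simpl in *; congruence.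
Qed.

Theorem theorem3 :
  ((forall f, VeeBox f \/ VeeDia f -> prv X_pm_join f) /\
   (forall f, PmBox f \/ PmDia f -> prv X_vee_join f)) /\
  (forall p : nat,
     ~ prv X_pm_vee (Iff (Box (Var p)) (Neg (Dia (Neg (Var p))))) /\
     ~ prv X_pm_vee (Iff (Dia (Var p)) (Neg (Box (Neg (Var p)))))).
Proof.
  split; [split|].
  - intros f [[a [b ->]]|[a [b ->]]].
    + eapply compose.
      * apply pr_extra. left. exists a, b. reflexivity.
      * apply iffR. apply pr_extra. right. right. right. exists a. reflexivity.
      * apply iffL. apply pr_extra. right. right. right. exists b. reflexivity.
    + eapply trans.
      * apply iffR. apply pr_extra. right. right. left. exists (Imp a b). reflexivity.
      * apply pr_extra. left. exists a, b. reflexivity.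
  - intros f [[a [b ->]]|[a [b ->]]].
    + eapply trans.
      * apply iffL. apply pr_extra. right. right. left. exists (Imp a b). reflexivity.
      * apply pr_extra. right. left. exists a, b. reflexivity.
    + eapply trans.
      * apply iffR. apply pr_extra. right. right. left. exists (Imp (Neg a) (Neg b)). reflexivity.
      * eapply compose.
        -- apply pr_extra. left. exists (Neg a), (Neg b). reflexivity.
        -- apply pr_rnbox. apply iffR. apply pr_n4, ax_nn.
        -- apply pr_rnbox. apply iffL. apply pr_n4, ax_nn.
  - intro p; split; intro H; pose proof (sound _ H (fun _ => false)) as E;
      simpl in E; discriminate.
Qed.
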